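(* Let $q=2^n$, let $B$ be a $k$-subset of $\mathrm{GF}(q)$, and let $E$ be a subset of $\mathrm{GF}(q)$ such that $\hat f_B(\mu)=\hat f_E(\mu^d)$ for all $\mu\in\mathrm{GF}(q)$, where $d$ is an integer with $\gcd(d,q-1)=1$. Let $a,b\in\mathrm{GF}(q)^*$. Then \[\sum_{x,y\in\mathrm{GF}(q)}(-1)^{f_B(x)+f_B(y)+f_B(ax+by)}=q^2-6qk+12k^2-8N_E(a^d,b^d,1).\] In particular, $N_B(a,b,1)=N_E(a^d,b^d,1)$.
   Context: $\mathrm{Tr}$ is the absolute trace $\mathrm{GF}(2^n)\to\mathrm{GF}(2)$. For a subset $S\subseteq\mathrm{GF}(q)$, $f_S$ is its characteristic function as a Boolean function, and $\hat f(\mu)=\sum_{x\in\mathrm{GF}(2^n)}(-1)^{f(x)+\mathrm{Tr}(\mu x)}$ is the Walsh transform. For $S\subseteq\mathrm{GF}(q)$ and $a,b,c\in\mathrm{GF}(q)$, $N_S(a,b,c)$ is the number of triples $(x,y,z)\in S^3$ with $ax+by+cz=0$. *)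

(* Defs.v *)
(* GF(q), q = 2^n, is modelled as an arbitrary finite field
   F with #|F| = 2^n (such a field is GF(2^n) up to isomorphism). *)
From HB Require Import structures.
From mathcomp Require Import all_boot all_order all_algebra.
Set Implicit Arguments. Unset Strict Implicit. Unset Printing Implicit Defensive.
Import Order.TTheory GRing.Theory Num.Theory.
Local Open Scope ring_scope.

(* absolute trace GF(2^n) -> GF(2), valued in F (it lies in {0,1}) *)
Definition absTr (F : finFieldType) (n : nat) (x : F) : F :=
  \sum_(i < n) x ^+ (2 ^ i)%N.

Definition chiTr (F : finFieldType) (n : nat) (x : F) : int :=
  if absTr n x == 0 then 1 else -1.

Definition charf (F : finFieldType) (S : {set F}) (x : F) : bool := x \in S.

Definition walsh (F : finFieldType) (n : nat) (f : F -> bool) (mu : F) : int :=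
  \sum_(x : F) (-1) ^+ f x * chiTr n (mu * x).

Definition N3 (F : finFieldType) (S : {set F}) (a b c : F) : nat :=
  #|[set t : F * F * F | [&& t.1.1 \in S, t.1.2 \in S, t.2 \in S &
                           a * t.1.1 + b * t.1.2 + c * t.2 == 0]]|.

(* Main.v *)
Require Import Defs.
From mathcomp Require Import all_boot all_order all_algebra all_field.
From mathcomp Require Import zify ring lra.
Import GRing.Theory Num.Theory.
Local Open Scope ring_scope.

Section Tr.
Variables (F : finFieldType) (n : nat) (hq : #|F| = (2 ^ n)%N).

Lemma n_gt0 : (0 < n)%N.
Proof.
have := finNzRing_gt1 F; rewrite hq; case: n => //.
Qed.

Lemma char2 : 2%N \in [pchar F].
Proof. exact: (card_finPcharP hq). Qed.

Lemma two0 : 2%:R = 0 :> F.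
Proof. exact: (pcharf0 char2). Qed.

Lemma absTrD (x y : F) : absTr n (x + y) = absTr n x + absTr n y.
Proof.
rewrite /absTr -big_split; apply: eq_bigr => i _; apply: exprDn_pchar.
by rewrite pnatX pnatE // char2.
Qed.

Lemma absTr2 (x : F) : absTr n x ^+ 2 = absTr n x.
Proof.
have := n_gt0; case E: n => [//|m] _.
rewrite /absTr.
have -> : (\sum_(i < m.+1) x ^+ (2 ^ i)) ^+ 2 = \sum_(i < m.+1) (x ^+ (2 ^ i)) ^+ 2.
  by rewrite -!(pFrobenius_autE char2) rmorph_sum.
rewrite big_ord_recr big_ord_recl /= -exprM -expnSr.
have -> : x ^+ (2 ^ m.+1) = x by rewrite -E -hq expf_card.
rewrite addrC; congr (_ + _); apply: eq_bigr => i _.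
by rewrite -exprM -expnSr.
Qed.

Lemma absTr01 (x : F) : absTr n x = 0 \/ absTr n x = 1.
Proof.
have := absTr2 x; set t := absTr n x => h.
have : t * (t - 1) = 0 by rewrite mulrBr mulr1 -expr2 h subrr.
by move/eqP; rewrite mulf_eq0 subr_eq0 => /orP[/eqP|/eqP]; [left|right].
Qed.

Lemma chiD (x y : F) : chiTr n (x + y) = chiTr n x * chiTr n y.
Proof.
rewrite /chiTr absTrD.
case: (absTr01 x) => ->; case: (absTr01 y) => ->; rewrite ?addr0 ?add0r ?eqxx ?oner_eq0 //.
by rewrite -[1 + 1]/(2%:R) two0 eqxx.
Qed.

Lemma chi0 : chiTr n (0 : F) = 1.
Proof.
rewrite /chiTr /absTr big1 ?eqxx // => i _; rewrite expr0n expn_eq0 //.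
Qed.

Lemma absTr_nontriv : exists c : F, absTr n c != 0.
Proof.
apply/existsP; rewrite -negb_forall; apply/negP => /forallP H.
have n0 := n_gt0.
have n1 : (n.-1 < n)%N by rewrite ltn_predL.
pose p : {poly F} := \sum_(i < n) 'X^(2 ^ i).
have pc j : p`_j = \sum_(i < n) (j == 2 ^ i)%N%:R by rewrite coef_sum; apply: eq_bigr => i _; rewrite coefXn.
have pn0 : p != 0.
  apply/eqP => /(congr1 (fun q : {poly F} => q`_(2 ^ n.-1)%N)); rewrite pc coef0.
  rewrite (bigD1 (@Ordinal n n.-1 n1)) //= eqxx big1 ?addr0; first by move/eqP; rewrite oner_eq0.
  move=> i /eqP hi; case: eqP => // e; case: hi; apply: val_inj => /=; move/eqP: e; rewrite eqn_exp2l // => /eqP -> //.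
have sz : (size p <= (2 ^ n.-1)%N.+1)%N.
  apply/leq_sizeP => j hj; rewrite pc big1 // => i0 _.
  case: eqP => // e; move: hj; rewrite e ltnNge leq_exp2l //; by rewrite -ltnS prednK // ltn_ord.
have := max_poly_roots pn0 (rs := enum F) _ (enum_uniq _).
rewrite -cardE hq.
have -> : all (root p) (enum F).
  apply/allP => x _; rewrite /root /p horner_sum.
  rewrite (eq_bigr (fun i : 'I_n => x ^+ (2 ^ i))); first exact: H x.
  by move=> i _; rewrite hornerXn.
move=> /(_ isT) h; have := leq_trans h sz.
rewrite -[in X in (X < _)%N](prednK n0) expnS; move: (expn_gt0 2 n.-1); lia.
Qed.

Lemma chi_sum (t : F) : \sum_(mu : F) chiTr n (mu * t) = if t == 0 then (#|F|)%:Z else 0.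
Proof.
case: eqP => [->|/eqP t0].
  by rewrite (eq_bigr (fun _ => 1)) => [|i _]; rewrite ?sumr_const ?mulr0 ?chi0 // -natz.
rewrite (reindex_inj (mulIf (invr_neq0 t0))) /=.
under eq_bigr do rewrite mulfVK //.
have [c hc] := absTr_nontriv.
set S := \sum_mu chiTr n mu.
have hS : S = - S.
  rewrite {1}/S (reindex_inj (addIr c)) /=.
  rewrite (eq_bigr (fun mu => chiTr n mu * chiTr n c)) => [|i _]; last exact: chiD.
  by rewrite -mulr_suml /chiTr (negPf hc) mulrN1.
lia.
Qed.


Definition Shat (S : {set F}) (nu : F) : int := \sum_(x in S) chiTr n (nu * x).

Lemma signb (b : bool) : (-1) ^+ b = 1 - 2 * (b%:R : int).
Proof. by case: b. Qed.

Lemma walsh_Shat (S : {set F}) nu :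
  walsh n (charf S) nu = (if nu == 0 then (#|F|)%:Z else 0) - 2 * Shat S nu.
Proof.
have h1 : \sum_x chiTr n (nu * x) = if nu == 0 then (#|F|)%:Z else 0.
  by rewrite -(chi_sum nu); apply: eq_bigr => x _; rewrite mulrC.
rewrite -h1 /walsh /Shat mulr_sumr [X in _ = _ - X]big_mkcond -sumrB; apply: eq_bigr => x _ /=.
rewrite /charf signb; case: (x \in S) => /=; lia.
Qed.

Lemma N3_sum (S : {set F}) a b c : (N3 S a b c)%:Z =
  \sum_x \sum_y \sum_z ([&& x \in S, y \in S, z \in S & a * x + b * y + c * z == 0]%:R : int).
Proof.
rewrite pair_bigA pair_bigA /N3 -sum1_card -natz natr_sum big_mkcond /=.
by apply: eq_bigr => [[[x y] z]] _; rewrite inE /=; case: ifP.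
Qed.

Lemma sum3 (I : finType) (P : pred I) (A B C : I -> int) :
  (\sum_(i | P i) A i) * (\sum_(i | P i) B i) * (\sum_(i | P i) C i) =
  \sum_(x | P x) \sum_(y | P y) \sum_(z | P z) A x * B y * C z.
Proof.
rewrite mulr_suml mulr_suml; apply: eq_bigr => x _.
rewrite -mulrA mulr_suml mulr_sumr; apply: eq_bigr => y _.
by rewrite mulrA mulr_sumr.
Qed.

Lemma N3_fourier (S : {set F}) a b c : (#|F|)%:Z * (N3 S a b c)%:Z =
  \sum_mu Shat S (a * mu) * Shat S (b * mu) * Shat S (c * mu).
Proof.
rewrite N3_sum mulr_sumr.
have E1 mu : Shat S (a * mu) * Shat S (b * mu) * Shat S (c * mu) =
  \sum_(x in S) \sum_(y in S) \sum_(z in S) chiTr n (mu * (a * x + b * y + c * z)).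
  rewrite /Shat sum3; apply: eq_bigr => x _; apply: eq_bigr => y _; apply: eq_bigr => z _.
  by rewrite !mulrDr !chiD !mulrA ![mu * _]mulrC.
symmetry; under eq_bigr do rewrite E1.
rewrite exchange_big /= [LHS]big_mkcond; apply: eq_bigr => x _.
case hx: (x \in S) => /=; last by rewrite big1 ?mulr0 // => y _; rewrite big1.
rewrite exchange_big /= [LHS]big_mkcond mulr_sumr; apply: eq_bigr => y _.
case hy: (y \in S) => /=; last by rewrite big1 ?mulr0.
rewrite exchange_big /= [LHS]big_mkcond mulr_sumr; apply: eq_bigr => z _.
case hz: (z \in S) => /=; last by rewrite mulr0.
by rewrite chi_sum; case: (_ == 0); rewrite ?mulr1 ?mulr0.
Qed.


Lemma expz_inj (d : int) : d != 0 -> coprimez d (#|F|%:Z - 1) ->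
  injective (fun x : F => x ^ d).
Proof.
move=> d0 cop.
case: (Bezoutz d (#|F|%:Z - 1)) => u [v huv].
move: huv; rewrite (eqP cop) => huv.
have q1 : (#|F|%:Z - 1) = (#|F|.-1)%:Z.
  have := finNzRing_gt1 F; case: #|F| => // m _; rewrite -addn1 PoszD; lia.
have key (z : F) : z != 0 -> (z ^ d) ^ u = z.
  move=> z0.
  have zq : z ^ (#|F|%:Z - 1) = 1.
    rewrite q1 -exprnP; apply: (mulfI z0); rewrite mulr1 -exprS prednK ?expf_card //.
    by have := finNzRing_gt1 F; case: #|F|.
  rewrite exprz_exp -[z in RHS]expr1z -huv expfzDr // [v * _]mulrC -(exprz_exp z (#|F|%:Z - 1) v) zq exp1rz mulr1.
  by rewrite mulrC.
move=> x y /= hxy.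
have [x0|x0] := eqVneq x 0.
  by move: hxy; rewrite x0 exp0rz (negPf d0) => /esym /eqP; rewrite expfz_eq0 d0 => /eqP.
have [y0|y0] := eqVneq y 0.
  by move: hxy; rewrite y0 exp0rz (negPf d0) => /eqP; rewrite expfz_eq0 (negPf x0) andbF.
by rewrite -(key x x0) -(key y y0) hxy.
Qed.

Lemma d_neq0 (B E : {set F}) (d : int)
  (hW : forall mu : F, walsh n (charf B) mu = walsh n (charf E) (mu ^ d)) : d != 0.
Proof.
apply/negP => /eqP d0.
have h1 : \sum_mu walsh n (charf B) mu = (#|F|)%:Z * (-1) ^+ charf B 0.
  rewrite /walsh exchange_big /=.
  under eq_bigr => x _ do rewrite -mulr_sumr (eq_bigr (fun mu => chiTr n (mu * x))) // chi_sum.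
  rewrite (bigD1 0) //= eqxx big1 => [|x /negPf ->]; last by rewrite mulr0.
  by rewrite addr0 mulrC.
have h2 : \sum_mu walsh n (charf B) mu = (#|F|)%:Z * walsh n (charf E) 1.
  rewrite (eq_bigr (fun _ => walsh n (charf E) 1)) => [|mu _]; last by rewrite hW d0 expr0z.
  by rewrite sumr_const -mulr_natl natz.
have h3 : walsh n (charf E) 1 = - (2 * Shat E 1) by rewrite walsh_Shat oner_eq0 sub0r.
have q0 : (#|F|)%:Z != 0 by have := finNzRing_gt1 F; case: #|F|.
move: h2; rewrite h1 h3 => /(mulfI q0).
by case: (charf B 0) => /=; lia.
Qed.

Lemma Shat_rel (B E : {set F}) (d : int)
  (hW : forall mu : F, walsh n (charf B) mu = walsh n (charf E) (mu ^ d)) nu :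
  Shat B nu = Shat E (nu ^ d).
Proof.
have d0 := @d_neq0 B E d hW.
have := hW nu; rewrite !walsh_Shat expfz_eq0 d0 /=.
case: (nu == 0); lia.
Qed.

Lemma N_eq (B E : {set F}) (d : int) (hd : coprimez d (#|F|%:Z - 1))
  (hW : forall mu : F, walsh n (charf B) mu = walsh n (charf E) (mu ^ d)) a b :
  N3 B a b 1 = N3 E (a ^ d) (b ^ d) 1.
Proof.
have d0 := @d_neq0 B E d hW.
have q0 : (#|F|)%:Z != 0 by have := finNzRing_gt1 F; case: #|F|.
have : (#|F|)%:Z * (N3 B a b 1)%:Z = (#|F|)%:Z * (N3 E (a ^ d) (b ^ d) 1)%:Z.
  rewrite !N3_fourier [RHS](reindex_inj (@expz_inj d d0 hd)) /=.
  by apply: eq_bigr => mu _; rewrite !(@Shat_rel B E d hW) !expfzMl exp1rz.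
by move/(mulfI q0) => [].
Qed.

Section Expand.
Variables (B : {set F}) (k : nat) (hk : #|B| = k) (a b : F) (ha : a != 0) (hb : b != 0).
Definition g (x : F) : int := (x \in B)%:R.

Lemma sum_g : \sum_x g x = k%:Z.
Proof.
have : \sum_(x in B) (1 : int) = k%:Z by rewrite sumr_const hk -natz.
by rewrite big_mkcond => <-; apply: eq_bigr => x _; rewrite /g; case: (x \in B).
Qed.

Lemma sum_gy x : \sum_y g (a * x + b * y) = k%:Z.
Proof.
rewrite -sum_g [RHS](reindex_inj (h := fun y => a * x + b * y)) //.
by move=> y1 y2 /= /addrI /(mulfI hb).
Qed.

Lemma sum_gx y : \sum_x g (a * x + b * y) = k%:Z.
Proof.
rewrite -sum_g [RHS](reindex_inj (h := fun x => a * x + b * y)) //.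
by move=> y1 y2 /= /addIr /(mulfI ha).
Qed.

Lemma L1 : \sum_(p : F * F) (1 : int) = (#|F| ^ 2)%:Z.
Proof. by rewrite sumr_const card_prod -natz natrM. Qed.

Lemma Lx : \sum_(p : F * F) g p.1 = (#|F| * k)%:Z.
Proof.
rewrite -(pair_bigA _ (fun x y => g x)) /=.
under eq_bigr do rewrite sumr_const.
by rewrite sumrMnl sum_g -mulr_natr natz -PoszM mulnC.
Qed.

Lemma Ly : \sum_(p : F * F) g p.2 = (#|F| * k)%:Z.
Proof.
rewrite -(pair_bigA _ (fun x y => g y)) /=.
under eq_bigr do rewrite sum_g.
by rewrite sumr_const -mulr_natr natz PoszM mulrC.
Qed.

Lemma Lz : \sum_(p : F * F) g (a * p.1 + b * p.2) = (#|F| * k)%:Z.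
Proof.
rewrite -(pair_bigA _ (fun x y => g (a * x + b * y))) /=.
under eq_bigr do rewrite sum_gy.
by rewrite sumr_const -mulr_natr natz PoszM mulrC.
Qed.

Lemma Lxy : \sum_(p : F * F) g p.1 * g p.2 = (k ^ 2)%:Z.
Proof.
rewrite -(pair_bigA _ (fun x y => g x * g y)) /=.
under eq_bigr do rewrite -mulr_sumr sum_g.
by rewrite -mulr_suml sum_g -PoszM expnS expn1.
Qed.

Lemma Lxz : \sum_(p : F * F) g p.1 * g (a * p.1 + b * p.2) = (k ^ 2)%:Z.
Proof.
rewrite -(pair_bigA _ (fun x y => g x * g (a * x + b * y))) /=.
under eq_bigr do rewrite -mulr_sumr sum_gy.
by rewrite -mulr_suml sum_g -PoszM expnS expn1.
Qed.

Lemma Lyz : \sum_(p : F * F) g p.2 * g (a * p.1 + b * p.2) = (k ^ 2)%:Z.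
Proof.
rewrite -(pair_bigA _ (fun x y => g y * g (a * x + b * y))) /= exchange_big /=.
under eq_bigr do rewrite -mulr_sumr sum_gx.
by rewrite -mulr_suml sum_g -PoszM expnS expn1.
Qed.

Lemma Lxyz : \sum_(p : F * F) g p.1 * g p.2 * g (a * p.1 + b * p.2) = (N3 B a b 1)%:Z.
Proof.
rewrite -(pair_bigA _ (fun x y => g x * g y * g (a * x + b * y))) /= N3_sum.
apply: eq_bigr => x _; apply: eq_bigr => y _.
rewrite (bigD1 (a * x + b * y)) //= big1 => [|z /negPf hz].
  rewrite addr0 /g mul1r (addrr_pchar2 char2) eqxx andbT.
  by do 3 case: (_ \in B).
rewrite mul1r.
have -> : (a * x + b * y + z == 0) = false.
  apply/negP; rewrite addr_eq0 (oppr_pchar2 char2) eq_sym; by rewrite hz.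
by rewrite !andbF.
Qed.

Lemma expand :
  \sum_(x : F) \sum_(y : F)
      (-1) ^+ (charf B x + charf B y + charf B (a * x + b * y) : nat)
    = (#|F| ^ 2)%:Z - 6 * (#|F| * k)%:Z + 12 * (k ^ 2)%:Z
      - 8 * (N3 B a b 1%R)%:Z :> int.
Proof.
have step x y : (-1) ^+ (charf B x + charf B y + charf B (a * x + b * y) : nat) =
  1 - 2 * g x - 2 * g y - 2 * g (a * x + b * y) + 4 * (g x * g y)
  + 4 * (g x * g (a * x + b * y)) + 4 * (g y * g (a * x + b * y))
  - 8 * (g x * g y * g (a * x + b * y)) :> int.
  rewrite !exprD !signb /g /charf; ring.
under eq_bigr do under eq_bigr do rewrite step.
rewrite pair_bigA /=.
rewrite !(sumrB, big_split) /= -!mulr_sumr L1 Lx Ly Lz Lxy Lxz Lyz Lxyz.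
ring.
Qed.

End Expand.

End Tr.

Theorem lemma5 (F : finFieldType) (n : nat) (hq : #|F| = (2 ^ n)%N)
  (k : nat) (B E : {set F}) (hk : #|B| = k) (d : int)
  (hd : coprimez d (#|F|%:Z - 1))
  (hW : forall mu : F, walsh n (charf B) mu = walsh n (charf E) (mu ^ d))
  (a b : F) (ha : a != 0) (hb : b != 0) :
  \sum_(x : F) \sum_(y : F)
      (-1) ^+ (charf B x + charf B y + charf B (a * x + b * y) : nat)
    = (#|F| ^ 2)%:Z - 6 * (#|F| * k)%:Z + 12 * (k ^ 2)%:Z
      - 8 * (N3 E (a ^ d) (b ^ d) 1%R)%:Z :> int
  /\ N3 B a b 1%R = N3 E (a ^ d) (b ^ d) 1%R.
Proof.
have hN := @N_eq F n hq B E d hd hW a b.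
split => //.
by rewrite -hN (@expand F n hq B k hk a b ha hb).
Qed.
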